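(* Let $A$ be a braided group in $\mathcal C$ and $B$ a braided group in $\mathcal{YD}(\mathcal C)^A_A$ with right $A$-action $\mu^B_r$ and coaction $\Delta^B_r$. Then the antipode of the cross product $A\rtimes B$ satisfies $S_{A\rtimes B}\circ S_{A\rtimes B}=(S_A^2\otimes S_B^2)\circ\Psi_{B,A}\circ\Psi_{A,B}\circ(A\otimes\sigma_{B/A})$, where $\sigma_{B/A}:=\mu^B_r\circ(B\otimes S_A)\circ\Delta^B_r$.
   Context: $\mathcal C$ is a braided monoidal category, assumed strict, with tensor product $\otimes$, unit $\underline 1$ and braiding $\Psi_{X,Y}:X\otimes Y\to Y\otimes X$. Inside tensor products of morphisms an object name $X$ stands for ${\rm id}_X$. A braided group in a braided category $(\mathcal D,\Phi)$ is a bialgebra $(A,\mu,\eta,\Delta,\epsilon)$ (with $\Delta\circ\mu=(\mu\otimes\mu)\circ(A\otimes\Phi_{A,A}\otimes A)\circ(\Delta\otimes\Delta)$ and unit/counit compatibilities) with antipode $S$. $\mathcal{YD}(\mathcal C)^A_A$ is the braided category of right crossed modules over $A$: right modules $\mu_r:X\otimes A\to X$ and comodules $\Delta_r:X\to X\otimes A$ with $(X\otimes\mu)\circ(\Psi_{A,X}\otimes A)\circ(A\otimes(\Delta_r\circ\mu_r))\circ(\Psi_{X,A}\otimes A)\circ(X\otimes\Delta)=(\mu_r\otimes\mu)\circ(X\otimes\Psi_{A,A}\otimes A)\circ(\Delta_r\otimes\Delta)$; tensor product action $(\mu^X_r\otimes\mu^Y_r)\circ(X\otimes\Psi_{Y,A}\otimes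 A)\circ(X\otimes Y\otimes\Delta)$, coaction $(X\otimes Y\otimes\mu)\circ(X\otimes\Psi_{A,Y}\otimes A)\circ(\Delta^X_r\otimes\Delta^Y_r)$; braiding $(Y\otimes\mu^X_r)\circ(\Psi_{X,Y}\otimes A)\circ(X\otimes\Delta^Y_r)$. The cross product $A\rtimes B$ is $A\otimes B$ with multiplication $(\mu_A\otimes\mu_B)\circ(A\otimes A\otimes\mu^B_r\otimes B)\circ(A\otimes\Psi_{B,A}\otimes A\otimes B)\circ(A\otimes B\otimes\Delta_A\otimes B)$, unit $\eta_A\otimes\eta_B$, comultiplication $(A\otimes B\otimes\mu_A\otimes B)\circ(A\otimes\Psi_{A,B}\otimes A\otimes B)\circ(A\otimes A\otimes\Delta^B_r\otimes B)\circ(\Delta_A\otimes\Delta_B)$, counit $\epsilon_A\otimes\epsilon_B$, and antipode $S_{A\rtimes B}=(A\otimes\mu^B_r)\circ(\Psi_{B,A}\otimes A)\circ(S_B\otimes(\Delta_A\circ S_A\circ\mu_A))\circ(\Psi_{A,B}\otimes A)\circ(A\otimes\Delta^B_r)$. *)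

(* Defs.v *)
(* A strict braided monoidal category is encoded with objects = words
   (lists) over a type of "generating" objects, tensor on objects = list
   concatenation and unit object = nil.  This makes strict associativity
   definitional on the concrete words occurring in the statement. *)
Set Implicit Arguments.
Unset Strict Implicit.
Open Scope list_scope.

(* transparent (computing) versions of the list lemmas *)
Definition app_assocT {T : Type} (l m n : list T) : l ++ (m ++ n) = (l ++ m) ++ n.
Proof.
  induction l as [|x l IH]; simpl.
  - exact eq_refl.
  - exact (f_equal (cons x) IH).
Defined.

Definition app_nil_rT {T : Type} (l : list T) : l ++ nil = l.
Proof.
  induction l as [|x l IH]; simpl.
  - exact eq_refl.
  - exact (f_equal (cons x) IH).
Defined.

Definition castH {O : Type} {Hm : list O -> list O -> Type} {x x' y y' : list O}
  (ex : x = x') (ey : y = y') (f : Hm x y) : Hm x' y' :=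
  match ex in _ = x0, ey in _ = y0 return Hm x0 y0 with
  | eq_refl, eq_refl => f
  end.

Record BraidedCat : Type := {
  Ob : Type;
  Hom : list Ob -> list Ob -> Type;
  comp : forall x y z, Hom y z -> Hom x y -> Hom x z;
  idm : forall x, Hom x x;
  tens : forall x y x' y', Hom x y -> Hom x' y' -> Hom (x ++ x') (y ++ y');
  braid : forall x y, Hom (x ++ y) (y ++ x);
  braid_inv : forall x y, Hom (y ++ x) (x ++ y);
  comp_assoc : forall x y z w (f : Hom x y) (g : Hom y z) (h : Hom z w),
      comp h (comp g f) = comp (comp h g) f;
  comp_id_l : forall x y (f : Hom x y), comp (idm y) f = f;
  comp_id_r : forall x y (f : Hom x y), comp f (idm x) = f;
  tens_comp : forall x y z x' y' z' (f : Hom y z) (f' : Hom x y)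
      (g : Hom y' z') (g' : Hom x' y'),
      comp (tens f g) (tens f' g') = tens (comp f f') (comp g g');
  tens_id : forall x y, tens (idm x) (idm y) = idm (x ++ y);
  tens_assoc : forall x y x' y' x'' y'' (f : Hom x y) (g : Hom x' y') (h : Hom x'' y''),
      castH (Hm := Hom) (app_assocT x x' x'') (app_assocT y y' y'') (tens f (tens g h))
      = tens (tens f g) h;
  tens_unit_l : forall x y (f : Hom x y), tens (idm nil) f = f;
  tens_unit_r : forall x y (f : Hom x y),
      castH (Hm := Hom) (app_nil_rT x) (app_nil_rT y) (tens f (idm nil)) = f;
  braid_nat : forall x y x' y' (f : Hom x y) (g : Hom x' y'),
      comp (braid y y') (tens f g) = comp (tens g f) (braid x x');
  braid_inv_l : forall x y, comp (braid_inv x y) (braid x y) = idm (x ++ y);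
  braid_inv_r : forall x y, comp (braid x y) (braid_inv x y) = idm (y ++ x);
  hexagon1 : forall x y z,
      braid x (y ++ z)
      = comp (castH (Hm := Hom) eq_refl (app_assocT y z x) (tens (idm y) (braid x z)))
             (castH (Hm := Hom) (eq_sym (app_assocT x y z)) (eq_sym (app_assocT y x z))
                    (tens (braid x y) (idm z)));
  hexagon2 : forall x y z,
      braid (x ++ y) z
      = comp (castH (Hm := Hom) eq_refl (eq_sym (app_assocT z x y)) (tens (braid x z) (idm y)))
             (castH (Hm := Hom) (app_assocT x y z) (app_assocT x z y)
                    (tens (idm x) (braid y z)))
}.

Arguments Hom {b} _ _.
Arguments comp {b x y z} _ _.
Arguments idm {b} _.
Arguments tens {b x y x' y'} _ _.
Arguments braid {b} _ _.
Arguments braid_inv {b} _ _.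

Notation "g ∘ f" := (comp g f) (at level 40, left associativity).
Notation "f ⊗ g" := (tens f g) (at level 30, right associativity).

Definition w {C : BraidedCat} (x : Ob C) : list (Ob C) := x :: nil.

Section Structures.
Variable C : BraidedCat.

(* A braided group (Hopf algebra with antipode) on the object x, in a
   braided category whose relevant braiding X⊗X -> X⊗X is Phi. *)
Definition is_braided_group_wrt (x : Ob C) (Phi : Hom (w x ++ w x) (w x ++ w x))
  (mu : Hom (w x ++ w x) (w x)) (eta : Hom nil (w x))
  (delta : Hom (w x) (w x ++ w x)) (eps : Hom (w x) nil) (S : Hom (w x) (w x)) : Prop :=
  let X := idm (w x) in
  mu ∘ (mu ⊗ X) = mu ∘ (X ⊗ mu) /\
  mu ∘ (eta ⊗ X) = X /\
  mu ∘ (X ⊗ eta) = X /\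
  (delta ⊗ X) ∘ delta = (X ⊗ delta) ∘ delta /\
  (eps ⊗ X) ∘ delta = X /\
  (X ⊗ eps) ∘ delta = X /\
  delta ∘ mu = (mu ⊗ mu) ∘ (X ⊗ Phi ⊗ X) ∘ (delta ⊗ delta) /\
  delta ∘ eta = eta ⊗ eta /\
  eps ∘ mu = eps ⊗ eps /\
  eps ∘ eta = idm nil /\
  mu ∘ (S ⊗ X) ∘ delta = eta ∘ eps /\
  mu ∘ (X ⊗ S) ∘ delta = eta ∘ eps.

Definition is_braided_group (a : Ob C) mu eta delta eps S : Prop :=
  is_braided_group_wrt (braid (w a) (w a)) mu eta delta eps S.

Section YD.
Variables (a : Ob C) (muA : Hom (w a ++ w a) (w a)) (etaA : Hom nil (w a))
          (deltaA : Hom (w a) (w a ++ w a)) (epsA : Hom (w a) nil).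

Definition is_YD_object (x : Ob C) (act : Hom (w x ++ w a) (w x))
  (coact : Hom (w x) (w x ++ w a)) : Prop :=
  let X := idm (w x) in let A := idm (w a) in
  act ∘ (act ⊗ A) = act ∘ (X ⊗ muA) /\
  act ∘ (X ⊗ etaA) = X /\
  (coact ⊗ A) ∘ coact = (X ⊗ deltaA) ∘ coact /\
  (X ⊗ epsA) ∘ coact = X /\
  (X ⊗ muA) ∘ (braid (w a) (w x) ⊗ A) ∘ (A ⊗ (coact ∘ act))
     ∘ (braid (w x) (w a) ⊗ A) ∘ (X ⊗ deltaA)
  = (act ⊗ muA) ∘ (X ⊗ braid (w a) (w a) ⊗ A) ∘ (coact ⊗ deltaA).

Variables (b : Ob C) (act : Hom (w b ++ w a) (w b)) (coact : Hom (w b) (w b ++ w a)).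

Definition actBB : Hom (w b ++ w b ++ w a) (w b ++ w b) :=
  (act ⊗ act) ∘ (idm (w b) ⊗ braid (w b) (w a) ⊗ idm (w a))
    ∘ (idm (w b) ⊗ idm (w b) ⊗ deltaA).
Definition coactBB : Hom (w b ++ w b) (w b ++ w b ++ w a) :=
  (idm (w b) ⊗ idm (w b) ⊗ muA) ∘ (idm (w b) ⊗ braid (w a) (w b) ⊗ idm (w a))
    ∘ (coact ⊗ coact).

Definition YD_braid_BB : Hom (w b ++ w b) (w b ++ w b) :=
  (idm (w b) ⊗ act) ∘ (braid (w b) (w b) ⊗ idm (w a)) ∘ (idm (w b) ⊗ coact).

(* B is a braided group in YD(C)^A_A: a YD object whose structure maps are
   morphisms of YD(C)^A_A (module and comodule maps; the unit object carries
   the trivial action epsA and coaction etaA) satisfying the braided group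
   axioms with respect to the braiding of YD(C)^A_A. *)
Definition is_braided_group_in_YD (muB : Hom (w b ++ w b) (w b)) (etaB : Hom nil (w b))
  (deltaB : Hom (w b) (w b ++ w b)) (epsB : Hom (w b) nil) (SB : Hom (w b) (w b)) : Prop :=
  let A := idm (w a) in
  is_YD_object act coact /\
  muB ∘ actBB = act ∘ (muB ⊗ A) /\ coact ∘ muB = (muB ⊗ A) ∘ coactBB /\
  etaB ∘ epsA = act ∘ (etaB ⊗ A) /\ coact ∘ etaB = etaB ⊗ etaA /\
  deltaB ∘ act = actBB ∘ (deltaB ⊗ A) /\ coactBB ∘ deltaB = (deltaB ⊗ A) ∘ coact /\
  epsB ∘ act = epsA ∘ (epsB ⊗ A) /\ etaA ∘ epsB = (epsB ⊗ A) ∘ coact /\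
  SB ∘ act = act ∘ (SB ⊗ A) /\ coact ∘ SB = (SB ⊗ A) ∘ coact /\
  is_braided_group_wrt YD_braid_BB muB etaB deltaB epsB SB.

Definition sigmaBA (SA : Hom (w a) (w a)) : Hom (w b) (w b) :=
  act ∘ (idm (w b) ⊗ SA) ∘ coact.

Definition cross_antipode (SA : Hom (w a) (w a)) (SB : Hom (w b) (w b))
  : Hom (w a ++ w b) (w a ++ w b) :=
  (idm (w a) ⊗ act) ∘ (braid (w b) (w a) ⊗ idm (w a))
    ∘ (SB ⊗ (deltaA ∘ SA ∘ muA)) ∘ (braid (w a) (w b) ⊗ idm (w a))
    ∘ (idm (w a) ⊗ coact).
End YD.
End Structures.

(* Main.v *)
Require Import Defs.
From Stdlib Require Import List Arith Bool ProofIrrelevance Eqdep_dec Lia.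
Import ListNotations.
Open Scope list_scope.
Set Implicit Arguments.
Unset Strict Implicit.

Inductive gen : Type :=
| Gmu | Geta | Gde | Gep | Gs | Gbr (x y : bool) | Gact | Gco | Gsb.

Definition gdom (g : gen) : list bool :=
  match g with
  | Gmu => [true; true] | Geta => [] | Gde => [true] | Gep => [true] | Gs => [true]
  | Gbr x y => [x; y] | Gact => [false; true] | Gco => [false] | Gsb => [false]
  end.
Definition gcod (g : gen) : list bool :=
  match g with
  | Gmu => [true] | Geta => [true] | Gde => [true; true] | Gep => [] | Gs => [true]
  | Gbr x y => [y; x] | Gact => [false] | Gco => [false; true] | Gsb => [false]
  end.

Fixpoint weqb (x y : list bool) : bool :=
  match x, y with
  | [], [] => true
  | u :: x, v :: y => Bool.eqb u v && weqb x y
  | _, _ => false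
  end.
Lemma weqb_eq x y : weqb x y = true -> x = y.
Proof.
  revert y; induction x as [|u x IH]; destruct y as [|v y]; simpl; try discriminate; auto.
  intros H; apply andb_prop in H; destruct H as [H1 H2].
  apply eqb_prop in H1; subst; f_equal; auto.
Qed.
Definition wdec (x y : list bool) : {x = y} + {x <> y}.
Proof. decide equality; decide equality. Defined.

Definition geqb (g h : gen) : bool :=
  match g, h with
  | Gmu, Gmu | Geta, Geta | Gde, Gde | Gep, Gep | Gs, Gs | Gact, Gact | Gco, Gco | Gsb, Gsb => true
  | Gbr x y, Gbr x' y' => Bool.eqb x x' && Bool.eqb y y'
  | _, _ => false
  end.
Lemma geqb_eq g h : geqb g h = true -> g = h.
Proof.
  destruct g, h; simpl; try discriminate; auto.
  intros H; apply andb_prop in H; destruct H as [H1 H2];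
  apply eqb_prop in H1; apply eqb_prop in H2; subst; auto.
Qed.
Fixpoint deqb (d e : list (nat * gen)) : bool :=
  match d, e with
  | [], [] => true
  | (k, g) :: d, (k', g') :: e => Nat.eqb k k' && geqb g g' && deqb d e
  | _, _ => false
  end.
Lemma deqb_eq d e : deqb d e = true -> d = e.
Proof.
  revert e; induction d as [|[k g] d IH]; destruct e as [|[k' g'] e]; simpl; try discriminate; auto.
  intros H; apply andb_prop in H; destruct H as [H H3]; apply andb_prop in H; destruct H as [H1 H2].
  apply Nat.eqb_eq in H1; apply geqb_eq in H2; subst; f_equal; auto.
Qed.

Definition lay_ok (x : list bool) (l : nat * gen) : bool :=
  let (k, g) := l in
  (k + length (gdom g) <=? length x) && weqb (firstn (length (gdom g)) (skipn k x)) (gdom g).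
Definition lay_cod (x : list bool) (l : nat * gen) : list bool :=
  let (k, g) := l in firstn k x ++ gcod g ++ skipn (k + length (gdom g)) x.
Fixpoint wt (x : list bool) (d : list (nat * gen)) : bool :=
  match d with [] => true | l :: d => lay_ok x l && wt (lay_cod x l) d end.
Fixpoint codd (x : list bool) (d : list (nat * gen)) : list bool :=
  match d with [] => x | l :: d => codd (lay_cod x l) d end.
Definition shift (n : nat) (d : list (nat * gen)) : list (nat * gen) :=
  map (fun l => (fst l + n, snd l)) d.

Definition newd (d p q : list (nat * gen)) (i k : nat) :=
  firstn i d ++ shift k q ++ skipn (i + length p) d.
Definition chk (x : list bool) (d : list (nat * gen)) (u : list bool) (p q : list (nat * gen)) (i k : nat) : bool :=
  let y := codd x (firstn i d) in
  wt x d && wt x (newd d p q i k) && deqb (firstn (length p) (skipn i d)) (shift k p)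
  && (length p + i <=? length d)
  && (k + length u <=? length y) && weqb (firstn (length u) (skipn k y)) u
  && wt u p && wt u q.

Inductive ex : Type := EG (g : gen) | EI (x : list bool) | EC (e1 e2 : ex) | ET (e1 e2 : ex).
Fixpoint edom (e : ex) : list bool :=
  match e with EG g => gdom g | EI x => x | EC e1 e2 => edom e2 | ET e1 e2 => edom e1 ++ edom e2 end.
Fixpoint ecod (e : ex) : list bool :=
  match e with EG g => gcod g | EI x => x | EC e1 e2 => ecod e1 | ET e1 e2 => ecod e1 ++ ecod e2 end.
Fixpoint wtE (e : ex) : bool :=
  match e with
  | EG _ | EI _ => true
  | EC e1 e2 => wtE e1 && wtE e2 && weqb (ecod e2) (edom e1)
  | ET e1 e2 => wtE e1 && wtE e2
  end.
Fixpoint flatten (e : ex) : list (nat * gen) :=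
  match e with
  | EG g => [(0, g)] | EI _ => []
  | EC e1 e2 => flatten e2 ++ flatten e1
  | ET e1 e2 => flatten e1 ++ shift (length (ecod e1)) (flatten e2)
  end.
Lemma weqb_refl x : weqb x x = true.
Proof. induction x as [|t x IH]; simpl; auto. rewrite eqb_reflx; auto. Qed.
Lemma shift0 d : shift 0 d = d.
Proof. induction d as [|[k g] d IH]; simpl; auto. rewrite Nat.add_0_r, IH; reflexivity. Qed.

Definition bexpR (u : list bool) (z : bool) : ex :=
  match u with
  | [] => EI [z] | [x] => EG (Gbr x z)
  | [x; y] => EC (ET (EG (Gbr x z)) (EI [y])) (ET (EI [x]) (EG (Gbr y z)))
  | _ => EI [] end.
Definition bexpL (z : bool) (u : list bool) : ex :=
  match u with
  | [] => EI [z] | [x] => EG (Gbr z x)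
  | [x; y] => EC (ET (EI [x]) (EG (Gbr z y))) (ET (EG (Gbr z x)) (EI [y]))
  | _ => EI [] end.

Section Eng.
Variable C : BraidedCat.
Variables a b : Ob C.
Variables (muA : Hom (w a ++ w a) (w a)) (etaA : Hom nil (w a))
  (deltaA : Hom (w a) (w a ++ w a)) (epsA : Hom (w a) nil) (SA : Hom (w a) (w a))
  (act : Hom (w b ++ w a) (w b)) (coact : Hom (w b) (w b ++ w a)) (SB : Hom (w b) (w b)).

Definition ob (t : bool) : Ob C := if t then a else b.
Fixpoint W (l : list bool) : list (Ob C) := match l with nil => nil | t :: l => ob t :: W l end.

Definition gi (g : gen) : Hom (W (gdom g)) (W (gcod g)) :=
  match g return Hom (W (gdom g)) (W (gcod g)) with
  | Gmu => muA | Geta => etaA | Gde => deltaA | Gep => epsA | Gs => SA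
  | Gbr x y => braid (W [x]) (W [y])
  | Gact => act | Gco => coact | Gsb => SB
  end.

Record Mor := mk { md : list bool; mc : list bool; mh : Hom (W md) (W mc) }.

Fixpoint Wapp (x y : list bool) : W (x ++ y) = W x ++ W y :=
  match x return W (x ++ y) = W x ++ W y with
  | [] => eq_refl
  | t :: x => f_equal (cons (ob t)) (Wapp x y)
  end.

Definition idM (x : list bool) : Mor := @mk x x (idm (W x)).
Definition genM (g : gen) : Mor := @mk (gdom g) (gcod g) (gi g).
Definition mcomp (f g : Mor) : Mor :=
  match wdec (mc g) (md f) with
  | left e => @mk (md g) (mc f) (mh f ∘ castH (Hm := Hom) eq_refl (f_equal W e) (mh g))
  | right _ => g
  end.
Definition mtens (f g : Mor) : Mor :=
  @mk (md f ++ md g) (mc f ++ mc g)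
     (castH (Hm := Hom) (eq_sym (Wapp _ _)) (eq_sym (Wapp _ _)) (mh f ⊗ mh g)).

Lemma castH_comp (x x' y y' z z' : list (Ob C)) (ex : x = x') (ey : y = y') (ez : z = z')
  (f : Hom y z) (g : Hom x y) :
  castH (Hm := Hom) ey ez f ∘ castH (Hm := Hom) ex ey g = castH (Hm := Hom) ex ez (f ∘ g).
Proof. destruct ex, ey, ez; reflexivity. Qed.
Lemma castH_castH (x x' x'' y y' y'' : list (Ob C)) (e1 : x = x') (e2 : y = y') (e3 : x' = x'')
  (e4 : y' = y'') (f : Hom x y) :
  castH (Hm := Hom) e3 e4 (castH (Hm := Hom) e1 e2 f) = castH (Hm := Hom) (eq_trans e1 e3) (eq_trans e2 e4) f.
Proof. destruct e1, e2, e3, e4; reflexivity. Qed.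
Lemma castH_pi (x x' y y' : list (Ob C)) (e1 e1' : x = x') (e2 e2' : y = y') (f : Hom x y) :
  castH (Hm := Hom) e1 e2 f = castH (Hm := Hom) e1' e2' f.
Proof. rewrite (proof_irrelevance _ e1 e1'), (proof_irrelevance _ e2 e2'); reflexivity. Qed.
Lemma castH_refl (x y : list (Ob C)) (e1 : x = x) (e2 : y = y) (f : Hom x y) :
  castH (Hm := Hom) e1 e2 f = f.
Proof. rewrite (castH_pi e1 eq_refl e2 eq_refl); reflexivity. Qed.
Lemma castH_idm (x x' : list (Ob C)) (e : x = x') : castH (Hm := Hom) e e (idm x) = idm x'.
Proof. destruct e; reflexivity. Qed.
Lemma tens_castH_r (x y x' y' x'' y'' : list (Ob C)) (e1 : x' = x'') (e2 : y' = y'')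
  (f : Hom x y) (g : Hom x' y') :
  f ⊗ castH (Hm := Hom) e1 e2 g = castH (Hm := Hom) (f_equal (app x) e1) (f_equal (app y) e2) (f ⊗ g).
Proof. destruct e1, e2; reflexivity. Qed.
Lemma tens_castH_l (x y x' y' x'' y'' : list (Ob C)) (e1 : x = x'') (e2 : y = y'')
  (f : Hom x y) (g : Hom x' y') :
  castH (Hm := Hom) e1 e2 f ⊗ g = castH (Hm := Hom) (f_equal (fun l => app l x') e1) (f_equal (fun l => app l y') e2) (f ⊗ g).
Proof. destruct e1, e2; reflexivity. Qed.

Lemma mk_eq (x y x' y' : list bool) (ex : x = x') (ey : y = y') (f : Hom (W x) (W y)) (g : Hom (W x') (W y')) :
  castH (Hm := Hom) (f_equal W ex) (f_equal W ey) f = g -> mk f = mk g.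
Proof. destruct ex, ey; simpl; intros ->; reflexivity. Qed.

Lemma mcomp_mk x y z (f : Hom (W y) (W z)) (g : Hom (W x) (W y)) :
  mcomp (mk f) (mk g) = mk (f ∘ g).
Proof.
  unfold mcomp; simpl. destruct (wdec y y) as [e|n]; [|congruence].
  rewrite (UIP_dec wdec e eq_refl). reflexivity.
Qed.
Lemma mtens_mk x y x' y' (f : Hom (W x) (W y)) (g : Hom (W x') (W y')) :
  mtens (mk f) (mk g) = mk (castH (Hm := Hom) (eq_sym (Wapp _ _)) (eq_sym (Wapp _ _)) (f ⊗ g)).
Proof. reflexivity. Qed.

Lemma Mor_eta (m : Mor) : m = mk (mh m).
Proof. destruct m as [x y f]; reflexivity. Qed.

Lemma M_assoc (f g h : Mor) : mc h = md g -> mc g = md f -> mcomp f (mcomp g h) = mcomp (mcomp f g) h.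
Proof.
  destruct f as [y' z f], g as [x' y g], h as [v x h]; simpl; intros E1 E2; subst.
  rewrite !mcomp_mk, comp_assoc; reflexivity.
Qed.
Lemma M_idl (f : Mor) y : mc f = y -> mcomp (idM y) f = f.
Proof.
  destruct f as [x y' f]; simpl; intros E; subst.
  unfold idM; rewrite mcomp_mk, comp_id_l; reflexivity.
Qed.
Lemma M_idr (f : Mor) x : md f = x -> mcomp f (idM x) = f.
Proof.
  destruct f as [x' y f]; simpl; intros E; subst.
  unfold idM; rewrite mcomp_mk, comp_id_r; reflexivity.
Qed.
Lemma M_tc (f f' g g' : Mor) : mc g = md f -> mc g' = md f' ->
  mcomp (mtens f f') (mtens g g') = mtens (mcomp f g) (mcomp f' g').
Proof.
  destruct f as [y z f], g as [x y1 g], f' as [y' z' f'], g' as [x' y1' g'];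
  simpl; intros E1 E2; subst.
  rewrite !mcomp_mk, !mtens_mk, mcomp_mk, castH_comp, tens_comp.
  reflexivity.
Qed.
Lemma M_tid x y : mtens (idM x) (idM y) = idM (x ++ y).
Proof.
  unfold idM; rewrite mtens_mk, tens_id. f_equal. rewrite castH_idm. reflexivity.
Qed.
Lemma M_tassoc (f g h : Mor) : mtens f (mtens g h) = mtens (mtens f g) h.
Proof.
  destruct f as [x y f], g as [x' y' g], h as [x'' y'' h].
  rewrite !mtens_mk.
  apply (mk_eq (ex := app_assoc x x' x'') (ey := app_assoc y y' y'')).
  rewrite tens_castH_r, tens_castH_l, !castH_castH.
  rewrite <- (@tens_assoc C _ _ _ _ _ _ f g h), !castH_castH. apply castH_pi.
Qed.
Lemma M_tunl (f : Mor) : mtens (idM []) f = f.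
Proof.
  destruct f as [x y f]; unfold idM; rewrite mtens_mk. simpl.
  rewrite (@tens_unit_l C _ _ f). reflexivity.
Qed.
Lemma M_tunr (f : Mor) : mtens f (idM []) = f.
Proof.
  destruct f as [x y f]; unfold idM; rewrite mtens_mk.
  apply (mk_eq (ex := app_nil_r x) (ey := app_nil_r y)).
  rewrite castH_castH.
  rewrite <- (@tens_unit_r C _ _ f) at 2. simpl. apply castH_pi.
Qed.


Definition layerM (x : list bool) (l : nat * gen) : Mor :=
  let (k, g) := l in
  mtens (idM (firstn k x)) (mtens (genM g) (idM (skipn (k + length (gdom g)) x))).
Fixpoint run (x : list bool) (d : list (nat * gen)) : Mor :=
  match d with [] => idM x | l :: d => mcomp (run (lay_cod x l) d) (layerM x l) end.

Lemma word_split x k g : lay_ok x (k, g) = true -> x = firstn k x ++ gdom g ++ skipn (k + length (gdom g)) x.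
Proof.
  simpl; intros H; apply andb_prop in H; destruct H as [H1 H2]. apply weqb_eq in H2.
  rewrite <- (firstn_skipn k x) at 1. f_equal.
  rewrite <- (firstn_skipn (length (gdom g)) (skipn k x)) at 1. rewrite H2, skipn_skipn, Nat.add_comm. reflexivity.
Qed.

Lemma mcomp_md f g : md (mcomp f g) = md g.
Proof. unfold mcomp; destruct (wdec (mc g) (md f)); reflexivity. Qed.
Lemma mcomp_mc f g : mc g = md f -> mc (mcomp f g) = mc f.
Proof. unfold mcomp; destruct (wdec (mc g) (md f)); [reflexivity|congruence]. Qed.

Lemma run_md x d : wt x d = true -> md (run x d) = x.
Proof.
  destruct d as [|[k g] d]; [reflexivity|]. simpl; intros H; apply andb_prop in H; destruct H as [H1 H2].
  rewrite mcomp_md. simpl. symmetry. exact (word_split H1).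
Qed.
Lemma run_mc x d : wt x d = true -> mc (run x d) = codd x d.
Proof.
  revert x; induction d as [|l d IH]; intros x; [reflexivity|]. simpl; intros H; apply andb_prop in H; destruct H as [H1 H2].
  rewrite mcomp_mc; [apply IH; auto|]. rewrite run_md by auto. destruct l; reflexivity.
Qed.

Lemma wt_app x d1 d2 : wt x (d1 ++ d2) = wt x d1 && wt (codd x d1) d2.
Proof. revert x; induction d1 as [|l d1 IH]; intros x; simpl; [reflexivity|]. rewrite IH, andb_assoc; reflexivity. Qed.
Lemma codd_app x d1 d2 : codd x (d1 ++ d2) = codd (codd x d1) d2.
Proof. revert x; induction d1 as [|l d1 IH]; intros x; simpl; auto. Qed.

Lemma run_app x d1 d2 : wt x (d1 ++ d2) = true -> run x (d1 ++ d2) = mcomp (run (codd x d1) d2) (run x d1).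
Proof.
  revert x; induction d1 as [|l d1 IH]; intros x H.
  - simpl. rewrite M_idr; auto. apply run_md; auto.
  - simpl in H |- *. apply andb_prop in H; destruct H as [H1 H2].
    rewrite wt_app in H2; apply andb_prop in H2; destruct H2 as [H2 H3].
    rewrite IH by (rewrite wt_app, H2, H3; reflexivity).
    rewrite M_assoc; auto.
    + rewrite run_md by auto. destruct l; reflexivity.
    + rewrite run_md, run_mc; auto.
Qed.

Lemma firstn_ctx (L u R : list bool) k : k <= length u -> firstn (k + length L) (L ++ u ++ R) = L ++ firstn k u.
Proof.
  intros H. rewrite Nat.add_comm, firstn_app_2. f_equal. rewrite firstn_app.
  replace (k - length u) with 0 by lia. simpl. apply app_nil_r.
Qed.
Lemma skipn_ctx (L u R : list bool) k n : k + n <= length u -> skipn (k + length L + n) (L ++ u ++ R) = skipn (k + n) u ++ R.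
Proof.
  intros H. replace (k + length L + n) with (length L + (k + n)) by lia.
  rewrite skipn_app. replace (length L + (k + n) - length L) with (k + n) by lia.
  rewrite skipn_all2 by lia. simpl. rewrite skipn_app. replace (k + n - length u) with 0 by lia. reflexivity.
Qed.

Lemma lay_ok_len x k g : lay_ok x (k, g) = true -> k + length (gdom g) <= length x.
Proof. simpl; intros H; apply andb_prop in H; destruct H as [H _]. apply Nat.leb_le; auto. Qed.

Lemma lay_cod_ctx L u R k g : lay_ok u (k, g) = true ->
  lay_cod (L ++ u ++ R) (k + length L, g) = L ++ lay_cod u (k, g) ++ R.
Proof.
  intros H; pose proof (lay_ok_len H). simpl.
  rewrite firstn_ctx, skipn_ctx by lia. rewrite !app_assoc. reflexivity.
Qed.
Lemma layerM_ctx L u R k g : lay_ok u (k, g) = true ->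
  layerM (L ++ u ++ R) (k + length L, g) = mtens (idM L) (mtens (layerM u (k, g)) (idM R)).
Proof.
  intros H; pose proof (lay_ok_len H). simpl.
  rewrite firstn_ctx, skipn_ctx by lia. rewrite <- !M_tid. rewrite !M_tassoc. reflexivity.
Qed.

Lemma lay_ok_ctx L u R k g : lay_ok u (k, g) = true -> lay_ok (L ++ u ++ R) (k + length L, g) = true.
Proof.
  intros H. pose proof (word_split H) as E. pose proof (lay_ok_len H).
  simpl. apply andb_true_intro; split.
  - apply Nat.leb_le. rewrite !length_app. lia.
  - replace (k + length L) with (length L + k) by lia. rewrite skipn_app.
    replace (length L + k - length L) with k by lia. rewrite skipn_all2 by lia. simpl.
    rewrite skipn_app. rewrite firstn_app.
    assert (E2 : length (skipn k u) >= length (gdom g)) by (rewrite length_skipn; lia).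
    replace (length (gdom g) - length (skipn k u)) with 0 by lia. simpl. rewrite app_nil_r.
    simpl in H; apply andb_prop in H; destruct H; auto.
Qed.

Lemma wt_ctx L R u p : wt u p = true -> wt (L ++ u ++ R) (shift (length L) p) = true.
Proof.
  revert u; induction p as [|[k g] p IH]; intros u H; [reflexivity|].
  cbn [wt shift map fst snd] in H |- *. apply andb_prop in H; destruct H as [H1 H2].
  rewrite lay_ok_ctx by auto. rewrite lay_cod_ctx by auto. simpl. apply IH; auto.
Qed.

Lemma run_ctx L R u p : wt u p = true ->
  run (L ++ u ++ R) (shift (length L) p) = mtens (idM L) (mtens (run u p) (idM R)).
Proof.
  revert u; induction p as [|[k g] p IH]; intros u H.
  - simpl. rewrite !M_tid. reflexivity.
  - cbn [wt run shift map fst snd] in H |- *. apply andb_prop in H; destruct H as [H1 H2].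
    rewrite lay_cod_ctx by auto. rewrite IH by auto. rewrite layerM_ctx by auto.
    rewrite !M_tc.
    + rewrite !M_idl by reflexivity. reflexivity.
    + simpl. rewrite run_md by auto. reflexivity.
    + reflexivity.
    + reflexivity.
    + simpl. rewrite run_md by auto. reflexivity.
Qed.

Lemma run_app3 x d1 d2 d3 : wt x (d1 ++ d2 ++ d3) = true ->
  run x (d1 ++ d2 ++ d3) = mcomp (run (codd (codd x d1) d2) d3) (mcomp (run (codd x d1) d2) (run x d1)).
Proof.
  intros H. rewrite run_app by auto. rewrite wt_app in H; apply andb_prop in H; destruct H as [H1 H2].
  rewrite run_app by auto. rewrite wt_app in H2; apply andb_prop in H2; destruct H2 as [H2 H3].
  rewrite M_assoc; auto.
  all: rewrite ?run_md, ?run_mc; auto.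
Qed.


Lemma step_core x pre post y u p q k :
  wt x (pre ++ shift k p ++ post) = true -> wt x (pre ++ shift k q ++ post) = true ->
  codd x pre = y -> k + length u <= length y -> firstn (length u) (skipn k y) = u ->
  wt u p = true -> wt u q = true -> run u p = run u q ->
  run x (pre ++ shift k p ++ post) = run x (pre ++ shift k q ++ post).
Proof.
  intros W1 W2 Hy Hk Hu Wp Wq H.
  rewrite !run_app3 by auto. rewrite Hy.
  assert (Ey : y = firstn k y ++ u ++ skipn (k + length u) y).
  { rewrite <- (firstn_skipn k y) at 1. f_equal.
    rewrite <- (firstn_skipn (length u) (skipn k y)) at 1. rewrite Hu, skipn_skipn, Nat.add_comm. reflexivity. }
  assert (Hl : length (firstn k y) = k) by (rewrite length_firstn; lia).
  revert Ey Hl. generalize (firstn k y) (skipn (k + length u) y). intros L R Ey Hl. subst k. rewrite Ey.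
  assert (Hr : run (L ++ u ++ R) (shift (length L) p) = run (L ++ u ++ R) (shift (length L) q)).
  { rewrite !run_ctx by auto. rewrite H. reflexivity. }
  assert (Hc : codd (L ++ u ++ R) (shift (length L) p) = codd (L ++ u ++ R) (shift (length L) q)).
  { rewrite <- !run_mc by (apply wt_ctx; auto). rewrite Hr. reflexivity. }
  rewrite Hr, Hc. reflexivity.
Qed.

Lemma step x d e u p q (H : run u p = run u q) i k :
  chk x d u p q i k = true -> run x (newd d p q i k) = run x e -> run x d = run x e.
Proof.
  unfold chk; intros Hc E. rewrite <- E.
  repeat match type of Hc with
  | (_ && _) = true => apply andb_prop in Hc; destruct Hc as [Hc ?]
  end.
  match goal with
  | h : deqb _ _ = true |- _ => apply deqb_eq in h
  end.
  match goal with
  | h : weqb _ _ = true |- _ => apply weqb_eq in h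
  end.
  repeat match goal with
  | h : (_ <=? _) = true |- _ => apply Nat.leb_le in h
  end.
  assert (Ed : d = firstn i d ++ shift k p ++ skipn (i + length p) d).
  { match goal with h : firstn (length p) (skipn i d) = shift k p |- _ => rewrite <- h end.
    rewrite app_assoc. rewrite <- (firstn_skipn i d) at 1. rewrite <- app_assoc. f_equal.
    rewrite <- (firstn_skipn (length p) (skipn i d)) at 1. rewrite skipn_skipn, Nat.add_comm. reflexivity. }
  unfold newd in *. rewrite Ed at 1. rewrite Ed in Hc.
  eapply step_core; eauto.
Qed.


Lemma run_ctxL L u p : wt u p = true -> run (L ++ u) (shift (length L) p) = mtens (idM L) (run u p).
Proof. intros H. pose proof (run_ctx L [] H) as E. rewrite app_nil_r, M_tunr in E. exact E. Qed.
Lemma run_ctxR R u p : wt u p = true -> run (u ++ R) p = mtens (run u p) (idM R).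
Proof. intros H. pose proof (run_ctx [] R H) as E. simpl in E. rewrite shift0, M_tunl in E. exact E. Qed.
Lemma wt_ctxL L u p : wt u p = true -> wt (L ++ u) (shift (length L) p) = true.
Proof. intros H. pose proof (wt_ctx L [] H) as E. rewrite app_nil_r in E. exact E. Qed.
Lemma wt_ctxR R u p : wt u p = true -> wt (u ++ R) p = true.
Proof. intros H. pose proof (wt_ctx [] R H) as E. simpl in E. rewrite shift0 in E. exact E. Qed.
Lemma codd_ctxL L u p : wt u p = true -> codd (L ++ u) (shift (length L) p) = L ++ codd u p.
Proof. intros H. rewrite <- run_mc by (apply wt_ctxL; auto). rewrite run_ctxL by auto. simpl. rewrite run_mc; auto. Qed.
Lemma codd_ctxR R u p : wt u p = true -> codd (u ++ R) p = codd u p ++ R.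
Proof. intros H. rewrite <- run_mc by (apply wt_ctxR; auto). rewrite run_ctxR by auto. simpl. rewrite run_mc; auto. Qed.

Fixpoint eval (e : ex) : Mor :=
  match e with
  | EG g => genM g | EI x => idM x
  | EC e1 e2 => mcomp (eval e1) (eval e2)
  | ET e1 e2 => mtens (eval e1) (eval e2)
  end.

Lemma flatten_ok e : wtE e = true ->
  wt (edom e) (flatten e) = true /\ codd (edom e) (flatten e) = ecod e /\ run (edom e) (flatten e) = eval e.
Proof.
  induction e as [g|x|e1 IH1 e2 IH2|e1 IH1 e2 IH2]; intros H.
  - simpl. rewrite Nat.leb_refl, skipn_all, firstn_all, weqb_refl. simpl.
    split; [reflexivity|]. rewrite app_nil_r. split; [reflexivity|].
    unfold idM at 2. simpl. fold (idM []). rewrite M_tunl, M_tunr. apply M_idl; reflexivity.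
  - simpl. auto.
  - simpl in H. apply andb_prop in H; destruct H as [H H3]; apply andb_prop in H; destruct H as [H1 H2].
    apply weqb_eq in H3. destruct (IH1 H1) as [A1 [B1 C1]]. destruct (IH2 H2) as [A2 [B2 C2]].
    simpl. rewrite wt_app, codd_app, A2, B2, H3, A1, B1. split; [reflexivity|]. split; [reflexivity|].
    rewrite run_app by (rewrite wt_app, A2, B2, H3, A1; reflexivity). rewrite B2, H3, C1, C2. reflexivity.
  - simpl in H. apply andb_prop in H; destruct H as [H1 H2].
    destruct (IH1 H1) as [A1 [B1 C1]]. destruct (IH2 H2) as [A2 [B2 C2]].
    simpl. rewrite wt_app, codd_app, (wt_ctxR _ A1), (codd_ctxR _ A1), B1, (wt_ctxL _ A2), (codd_ctxL _ A2), B2.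
    split; [reflexivity|]. split; [reflexivity|].
    rewrite run_app by (rewrite wt_app, (wt_ctxR _ A1), (codd_ctxR _ A1), B1, (wt_ctxL _ A2); reflexivity).
    rewrite (codd_ctxR _ A1), B1, (run_ctxR _ A1), (run_ctxL _ A2), C1, C2.
    assert (D1 : mc (eval e1) = ecod e1) by (rewrite <- C1, run_mc; auto).
    assert (D2 : md (eval e2) = edom e2) by (rewrite <- C2, run_md; auto).
    rewrite M_tc.
    all: try (rewrite M_idl, M_idr; auto).
    all: simpl; auto.
Qed.

Lemma rule_of e1 e2 : wtE e1 = true -> wtE e2 = true -> edom e1 = edom e2 -> eval e1 = eval e2 ->
  run (edom e1) (flatten e1) = run (edom e1) (flatten e2).
Proof.
  intros H1 H2 E V. destruct (flatten_ok H1) as [_ [_ R1]]. destruct (flatten_ok H2) as [_ [_ R2]].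
  rewrite R1, E, R2. exact V.
Qed.

Lemma ichg g1 g2 m :
  run (gdom g1 ++ m ++ gdom g2)
    (flatten (EC (ET (EI (gcod g1)) (ET (EI m) (EG g2))) (ET (EG g1) (EI (m ++ gdom g2)))))
  = run (gdom g1 ++ m ++ gdom g2)
    (flatten (EC (ET (EG g1) (EI (m ++ gcod g2))) (ET (EI (gdom g1)) (ET (EI m) (EG g2))))).
Proof.
  apply (rule_of (e1 := EC (ET (EI (gcod g1)) (ET (EI m) (EG g2))) (ET (EG g1) (EI (m ++ gdom g2))))
     (e2 := EC (ET (EG g1) (EI (m ++ gcod g2))) (ET (EI (gdom g1)) (ET (EI m) (EG g2))))).
  - simpl. rewrite weqb_refl. reflexivity.
  - simpl. rewrite weqb_refl. reflexivity.
  - reflexivity.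
  - simpl. rewrite !M_tc by reflexivity. rewrite M_idl, M_idr by reflexivity.
    rewrite M_idl, M_idr by reflexivity. reflexivity.
Qed.

Lemma mk_inj x y (f g : Hom (W x) (W y)) : mk f = mk g -> f = g.
Proof.
  intros E. 
  assert (E' : existT (fun p : list bool * list bool => Hom (W (fst p)) (W (snd p))) (x, y) f =
               existT _ (x, y) g)
    by exact (f_equal (fun m => existT (fun p : list bool * list bool => Hom (W (fst p)) (W (snd p)))
                                 (md m, mc m) (mh m)) E).
  apply inj_pair2_eq_dec in E'; auto.
  intros p1 p2. decide equality; apply wdec.
Qed.


Definition bM (u v : list bool) : Mor :=
  @mk (u ++ v) (v ++ u) (castH (Hm := Hom) (eq_sym (Wapp u v)) (eq_sym (Wapp v u)) (braid (W u) (W v))).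

Lemma natR_M g z : mcomp (bM (gcod g) [z]) (mtens (genM g) (idM [z])) = mcomp (mtens (idM [z]) (genM g)) (bM (gdom g) [z]).
Proof.
  unfold bM, genM, idM. rewrite !mtens_mk, !mcomp_mk, !castH_comp. f_equal. f_equal.
  apply braid_nat.
Qed.
Lemma natL_M g z : mcomp (bM [z] (gcod g)) (mtens (idM [z]) (genM g)) = mcomp (mtens (genM g) (idM [z])) (bM [z] (gdom g)).
Proof.
  unfold bM, genM, idM. rewrite !mtens_mk, !mcomp_mk, !castH_comp. f_equal. f_equal.
  apply braid_nat.
Qed.

Lemma braid_nil_l1 (o : Ob C) : braid [] [o] = idm [o].
Proof.
  pose proof (@hexagon2 C [] [] [o]) as E.
  pose proof (@tens_unit_r C _ _ (braid [] [o])) as U.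
  cbv [castH app_nil_rT app_assocT list_rect list_ind f_equal eq_sym app] in E, U.
  rewrite U, (@tens_unit_l C) in E.
  pose proof (@braid_inv_l C [] [o]) as Hi. cbv [app] in Hi.
  rewrite <- Hi. rewrite E at 2. rewrite comp_assoc, Hi, comp_id_l. reflexivity.
Qed.
Lemma braid_nil_r1 (o : Ob C) : braid [o] [] = idm [o].
Proof.
  pose proof (@hexagon1 C [o] [] []) as E.
  pose proof (@tens_unit_r C _ _ (braid [o] [])) as U.
  cbv [castH app_nil_rT app_assocT list_rect list_ind f_equal eq_sym app] in E, U.
  rewrite U, (@tens_unit_l C) in E.
  pose proof (@braid_inv_l C [o] []) as Hi. cbv [app] in Hi.
  rewrite <- Hi. rewrite E at 2. rewrite comp_assoc, Hi, comp_id_l. reflexivity.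
Qed.


Lemma bR0 z : eval (bexpR [] z) = bM [] [z].
Proof. unfold bM; simpl. rewrite braid_nil_l1. reflexivity. Qed.
Lemma bL0 z : eval (bexpL z []) = bM [z] [].
Proof. unfold bM; simpl. rewrite braid_nil_r1. reflexivity. Qed.
Lemma bR1 x z : eval (bexpR [x] z) = bM [x] [z].
Proof. reflexivity. Qed.
Lemma bL1 x z : eval (bexpL z [x]) = bM [z] [x].
Proof. reflexivity. Qed.
Lemma bR2 x y z : eval (bexpR [x; y] z) = bM [x; y] [z].
Proof.
  destruct x, y, z; exact (f_equal (@mk [_;_;_] [_;_;_]) (eq_sym (@hexagon2 C [ob _] [ob _] [ob _]))).
Qed.
Lemma bL2 x y z : eval (bexpL z [x; y]) = bM [z] [x; y].
Proof.
  destruct x, y, z; exact (f_equal (@mk [_;_;_] [_;_;_]) (eq_sym (@hexagon1 C [ob _] [ob _] [ob _]))).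
Qed.

Lemma NR g z : run (gdom g ++ [z]) (flatten (EC (bexpR (gcod g) z) (ET (EG g) (EI [z]))))
             = run (gdom g ++ [z]) (flatten (EC (ET (EI [z]) (EG g)) (bexpR (gdom g) z))).
Proof.
  apply (rule_of (e1 := EC (bexpR (gcod g) z) (ET (EG g) (EI [z]))) (e2 := EC (ET (EI [z]) (EG g)) (bexpR (gdom g) z))).
  - destruct g; try destruct x; try destruct y; destruct z; reflexivity.
  - destruct g; try destruct x; try destruct y; destruct z; reflexivity.
  - destruct g; try destruct x; try destruct y; reflexivity.
  - cbn [eval]. destruct g; cbn [gdom gcod]; rewrite ?bR0, ?bR1, ?bR2; apply natR_M.
Qed.
Lemma NL g z : run ([z] ++ gdom g) (flatten (EC (bexpL z (gcod g)) (ET (EI [z]) (EG g))))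
             = run ([z] ++ gdom g) (flatten (EC (ET (EG g) (EI [z])) (bexpL z (gdom g)))).
Proof.
  apply (rule_of (e1 := EC (bexpL z (gcod g)) (ET (EI [z]) (EG g))) (e2 := EC (ET (EG g) (EI [z])) (bexpL z (gdom g)))).
  - destruct g; try destruct x; try destruct y; destruct z; reflexivity.
  - destruct g; try destruct x; try destruct y; destruct z; reflexivity.
  - destruct g; try destruct x; try destruct y; reflexivity.
  - cbn [eval]. destruct g; cbn [gdom gcod]; rewrite ?bL0, ?bL1, ?bL2; apply natL_M.
Qed.

End Eng.

Section Main.
Variable C : BraidedCat.
Variables a b : Ob C.
Variables (muA : Hom (w a ++ w a) (w a)) (etaA : Hom nil (w a))
  (deltaA : Hom (w a) (w a ++ w a)) (epsA : Hom (w a) nil) (SA : Hom (w a) (w a))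
  (act : Hom (w b ++ w a) (w b)) (coact : Hom (w b) (w b ++ w a)) (SB : Hom (w b) (w b)).
Let XA := idm (w a).
Let XB := idm (w b).
Hypothesis Hassoc : muA ∘ (muA ⊗ idm (w a)) = muA ∘ (idm (w a) ⊗ muA).
Hypothesis HunitL : muA ∘ (etaA ⊗ idm (w a)) = idm (w a).
Hypothesis HunitR : muA ∘ (idm (w a) ⊗ etaA) = idm (w a).
Hypothesis Hcoassoc : (deltaA ⊗ idm (w a)) ∘ deltaA = (idm (w a) ⊗ deltaA) ∘ deltaA.
Hypothesis HcounitL : (epsA ⊗ idm (w a)) ∘ deltaA = idm (w a).
Hypothesis HcounitR : (idm (w a) ⊗ epsA) ∘ deltaA = idm (w a).
Hypothesis Hbialg : deltaA ∘ muA = (muA ⊗ muA) ∘ (idm (w a) ⊗ braid (w a) (w a) ⊗ idm (w a)) ∘ (deltaA ⊗ deltaA).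
Hypothesis Hdeta : deltaA ∘ etaA = etaA ⊗ etaA.
Hypothesis Hemu : epsA ∘ muA = epsA ⊗ epsA.
Hypothesis Heeta : epsA ∘ etaA = idm nil.
Hypothesis HantL : muA ∘ (SA ⊗ idm (w a)) ∘ deltaA = etaA ∘ epsA.
Hypothesis HantR : muA ∘ (idm (w a) ⊗ SA) ∘ deltaA = etaA ∘ epsA.
Hypothesis Hract : act ∘ (act ⊗ idm (w a)) = act ∘ (idm (w b) ⊗ muA).
Hypothesis Hrunit : act ∘ (idm (w b) ⊗ etaA) = idm (w b).
Hypothesis Hccoassoc : (coact ⊗ idm (w a)) ∘ coact = (idm (w b) ⊗ deltaA) ∘ coact.
Hypothesis Hccounit : (idm (w b) ⊗ epsA) ∘ coact = idm (w b).
Hypothesis Hyd : (idm (w b) ⊗ muA) ∘ (braid (w a) (w b) ⊗ idm (w a)) ∘ (idm (w a) ⊗ (coact ∘ act))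
     ∘ (braid (w b) (w a) ⊗ idm (w a)) ∘ (idm (w b) ⊗ deltaA)
  = (act ⊗ muA) ∘ (idm (w b) ⊗ braid (w a) (w a) ⊗ idm (w a)) ∘ (coact ⊗ deltaA).
Hypothesis Hsbact : SB ∘ act = act ∘ (SB ⊗ idm (w a)).
Hypothesis Hsbco : coact ∘ SB = (SB ⊗ idm (w a)) ∘ coact.

Notation R := (run muA etaA deltaA epsA SA act coact SB).
Notation ICH := (ichg muA etaA deltaA epsA SA act coact SB).
Notation NRr := (NR muA etaA deltaA epsA SA act coact SB).
Notation NLr := (NL muA etaA deltaA epsA SA act coact SB).
Ltac st H i k := apply (step (i:=i) (k:=k) H); [vm_compute; reflexivity | cbv -[run]].
Lemma h_assoc : R [true; true; true] (flatten (EC (EG Gmu) (ET (EG Gmu) (EI [true])))) = R [true; true; true] (flatten (EC (EG Gmu) (ET (EI [true]) (EG Gmu)))).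
Proof. apply (rule_of (e1 := (EC (EG Gmu) (ET (EG Gmu) (EI [true])))) (e2 := (EC (EG Gmu) (ET (EI [true]) (EG Gmu))))); try reflexivity. exact (f_equal (@mk C a b [true; true; true] [true]) Hassoc). Qed.
Lemma h_unitL : R [true] (flatten (EC (EG Gmu) (ET (EG Geta) (EI [true])))) = R [true] (flatten (EI [true])).
Proof. apply (rule_of (e1 := (EC (EG Gmu) (ET (EG Geta) (EI [true])))) (e2 := (EI [true]))); try reflexivity. exact (f_equal (@mk C a b [true] [true]) HunitL). Qed.
Lemma h_unitR : R [true] (flatten (EC (EG Gmu) (ET (EI [true]) (EG Geta)))) = R [true] (flatten (EI [true])).
Proof. apply (rule_of (e1 := (EC (EG Gmu) (ET (EI [true]) (EG Geta)))) (e2 := (EI [true]))); try reflexivity. exact (f_equal (@mk C a b [true] [true]) HunitR). Qed.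
Lemma h_coassoc : R [true] (flatten (EC (ET (EG Gde) (EI [true])) (EG Gde))) = R [true] (flatten (EC (ET (EI [true]) (EG Gde)) (EG Gde))).
Proof. apply (rule_of (e1 := (EC (ET (EG Gde) (EI [true])) (EG Gde))) (e2 := (EC (ET (EI [true]) (EG Gde)) (EG Gde)))); try reflexivity. exact (f_equal (@mk C a b [true] [true; true; true]) Hcoassoc). Qed.
Lemma h_counitL : R [true] (flatten (EC (ET (EG Gep) (EI [true])) (EG Gde))) = R [true] (flatten (EI [true])).
Proof. apply (rule_of (e1 := (EC (ET (EG Gep) (EI [true])) (EG Gde))) (e2 := (EI [true]))); try reflexivity. exact (f_equal (@mk C a b [true] [true]) HcounitL). Qed.
Lemma h_counitR : R [true] (flatten (EC (ET (EI [true]) (EG Gep)) (EG Gde))) = R [true] (flatten (EI [true])).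
Proof. apply (rule_of (e1 := (EC (ET (EI [true]) (EG Gep)) (EG Gde))) (e2 := (EI [true]))); try reflexivity. exact (f_equal (@mk C a b [true] [true]) HcounitR). Qed.
Lemma h_bialg : R [true; true] (flatten (EC (EG Gde) (EG Gmu))) = R [true; true] (flatten (EC (EC (ET (EG Gmu) (EG Gmu)) (ET (EI [true]) (ET (EG (Gbr true true)) (EI [true])))) (ET (EG Gde) (EG Gde)))).
Proof. apply (rule_of (e1 := (EC (EG Gde) (EG Gmu))) (e2 := (EC (EC (ET (EG Gmu) (EG Gmu)) (ET (EI [true]) (ET (EG (Gbr true true)) (EI [true])))) (ET (EG Gde) (EG Gde))))); try reflexivity. exact (f_equal (@mk C a b [true; true] [true; true]) Hbialg). Qed.
Lemma h_deta : R [] (flatten (EC (EG Gde) (EG Geta))) = R [] (flatten (ET (EG Geta) (EG Geta))).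
Proof. apply (rule_of (e1 := (EC (EG Gde) (EG Geta))) (e2 := (ET (EG Geta) (EG Geta)))); try reflexivity. exact (f_equal (@mk C a b [] [true; true]) Hdeta). Qed.
Lemma h_emu : R [true; true] (flatten (EC (EG Gep) (EG Gmu))) = R [true; true] (flatten (ET (EG Gep) (EG Gep))).
Proof. apply (rule_of (e1 := (EC (EG Gep) (EG Gmu))) (e2 := (ET (EG Gep) (EG Gep)))); try reflexivity. exact (f_equal (@mk C a b [true; true] []) Hemu). Qed.
Lemma h_eeta : R [] (flatten (EC (EG Gep) (EG Geta))) = R [] (flatten (EI [])).
Proof. apply (rule_of (e1 := (EC (EG Gep) (EG Geta))) (e2 := (EI []))); try reflexivity. exact (f_equal (@mk C a b [] []) Heeta). Qed.
Lemma h_antL : R [true] (flatten (EC (EC (EG Gmu) (ET (EG Gs) (EI [true]))) (EG Gde))) = R [true] (flatten (EC (EG Geta) (EG Gep))).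
Proof. apply (rule_of (e1 := (EC (EC (EG Gmu) (ET (EG Gs) (EI [true]))) (EG Gde))) (e2 := (EC (EG Geta) (EG Gep)))); try reflexivity. exact (f_equal (@mk C a b [true] [true]) HantL). Qed.
Lemma h_antR : R [true] (flatten (EC (EC (EG Gmu) (ET (EI [true]) (EG Gs))) (EG Gde))) = R [true] (flatten (EC (EG Geta) (EG Gep))).
Proof. apply (rule_of (e1 := (EC (EC (EG Gmu) (ET (EI [true]) (EG Gs))) (EG Gde))) (e2 := (EC (EG Geta) (EG Gep)))); try reflexivity. exact (f_equal (@mk C a b [true] [true]) HantR). Qed.
Lemma h_ract : R [false; true; true] (flatten (EC (EG Gact) (ET (EG Gact) (EI [true])))) = R [false; true; true] (flatten (EC (EG Gact) (ET (EI [false]) (EG Gmu)))).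
Proof. apply (rule_of (e1 := (EC (EG Gact) (ET (EG Gact) (EI [true])))) (e2 := (EC (EG Gact) (ET (EI [false]) (EG Gmu))))); try reflexivity. exact (f_equal (@mk C a b [false; true; true] [false]) Hract). Qed.
Lemma h_runit : R [false] (flatten (EC (EG Gact) (ET (EI [false]) (EG Geta)))) = R [false] (flatten (EI [false])).
Proof. apply (rule_of (e1 := (EC (EG Gact) (ET (EI [false]) (EG Geta)))) (e2 := (EI [false]))); try reflexivity. exact (f_equal (@mk C a b [false] [false]) Hrunit). Qed.
Lemma h_ccoassoc : R [false] (flatten (EC (ET (EG Gco) (EI [true])) (EG Gco))) = R [false] (flatten (EC (ET (EI [false]) (EG Gde)) (EG Gco))).
Proof. apply (rule_of (e1 := (EC (ET (EG Gco) (EI [true])) (EG Gco))) (e2 := (EC (ET (EI [false]) (EG Gde)) (EG Gco)))); try reflexivity. exact (f_equal (@mk C a b [false] [false; true; true]) Hccoassoc). Qed.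
Lemma h_ccounit : R [false] (flatten (EC (ET (EI [false]) (EG Gep)) (EG Gco))) = R [false] (flatten (EI [false])).
Proof. apply (rule_of (e1 := (EC (ET (EI [false]) (EG Gep)) (EG Gco))) (e2 := (EI [false]))); try reflexivity. exact (f_equal (@mk C a b [false] [false]) Hccounit). Qed.
Lemma h_yd : R [false; true] (flatten (EC (EC (EC (EC (ET (EI [false]) (EG Gmu)) (ET (EG (Gbr true false)) (EI [true]))) (ET (EI [true]) (EC (EG Gco) (EG Gact)))) (ET (EG (Gbr false true)) (EI [true]))) (ET (EI [false]) (EG Gde)))) = R [false; true] (flatten (EC (EC (ET (EG Gact) (EG Gmu)) (ET (EI [false]) (ET (EG (Gbr true true)) (EI [true])))) (ET (EG Gco) (EG Gde)))).
Proof. apply (rule_of (e1 := (EC (EC (EC (EC (ET (EI [false]) (EG Gmu)) (ET (EG (Gbr true false)) (EI [true]))) (ET (EI [true]) (EC (EG Gco) (EG Gact)))) (ET (EG (Gbr false true)) (EI [true]))) (ET (EI [false]) (EG Gde)))) (e2 := (EC (EC (ET (EG Gact) (EG Gmu)) (ET (EI [false]) (ET (EG (Gbr true true)) (EI [true])))) (ET (EG Gco) (EG Gde))))); try reflexivity. exact (f_equal (@mk C a b [false; true] [false; true]) Hyd). Qed.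
Lemma h_sbact : R [false; true] (flatten (EC (EG Gsb) (EG Gact))) = R [false; true] (flatten (EC (EG Gact) (ET (EG Gsb) (EI [true])))).
Proof. apply (rule_of (e1 := (EC (EG Gsb) (EG Gact))) (e2 := (EC (EG Gact) (ET (EG Gsb) (EI [true]))))); try reflexivity. exact (f_equal (@mk C a b [false; true] [false]) Hsbact). Qed.
Lemma h_sbco : R [false] (flatten (EC (EG Gco) (EG Gsb))) = R [false] (flatten (EC (ET (EG Gsb) (EI [true])) (EG Gco))).
Proof. apply (rule_of (e1 := (EC (EG Gco) (EG Gsb))) (e2 := (EC (ET (EG Gsb) (EI [true])) (EG Gco)))); try reflexivity. exact (f_equal (@mk C a b [false] [false; true]) Hsbco). Qed.
Lemma d_seta : R [] (flatten (EC (EG Gs) (EG Geta))) = R [] (flatten (EG Geta)).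
Proof.
  cbv -[run].
  st (eq_sym h_unitR) 2 0.
  st (ICH Gs Geta []) 1 0.
  st (eq_sym h_deta) 0 0.
  st h_antL 1 0.
  st h_eeta 0 0.
  reflexivity.
Qed.
Lemma d_eps : R [true] (flatten (EC (EG Gep) (EG Gs))) = R [true] (flatten (EG Gep)).
Proof.
  cbv -[run].
  st (eq_sym h_counitR) 0 0.
  st (eq_sym (ICH Gs Gep [])) 1 0.
  st (eq_sym (ICH Gep Gep [])) 2 0.
  st (eq_sym h_emu) 2 0.
  st h_antL 0 0.
  st h_eeta 1 0.
  reflexivity.
Qed.
Lemma d_L1 : R [true; true] (flatten (EC (EC (EG Gmu) (ET (EC (EG Gs) (EG Gmu)) (EG Gmu))) (EC (ET (EI [true]) (ET (EG (Gbr true true)) (EI [true]))) (ET (EG Gde) (EG Gde))))) = R [true; true] (flatten (EC (EG Geta) (ET (EG Gep) (EG Gep)))).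
Proof.
  cbv -[run].
  st (ICH Gs Gmu []) 4 0.
  st (eq_sym h_bialg) 0 0.
  st h_antL 1 0.
  st h_emu 0 0.
  reflexivity.
Qed.
Lemma d_L2 : R [true; true] (flatten (EC (EC (EG Gmu) (ET (EG Gmu) (EC (EC (EG Gmu) (ET (EG Gs) (EG Gs))) (EG (Gbr true true))))) (EC (ET (EI [true]) (ET (EG (Gbr true true)) (EI [true]))) (ET (EG Gde) (EG Gde))))) = R [true; true] (flatten (EC (EG Geta) (ET (EG Gep) (EG Gep)))).
Proof.
  cbv -[run].
  st (eq_sym h_assoc) 7 0.
  st (ICH Gmu (Gbr true true) []) 3 0.
  st (ICH Gmu Gs []) 4 0.
  st (ICH Gmu Gs [true]) 5 0.
  st h_assoc 6 0.
  st (NLr Gde true) 1 1.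
  st (ICH Gs Gs []) 3 2.
  st (ICH Gde Gs []) 2 1.
  st h_antR 3 1.
  st (eq_sym (ICH Gep Gs [])) 2 1.
  st (eq_sym (NLr Gep true)) 1 1.
  st h_unitR 3 0.
  st (ICH Gde Gep []) 0 0.
  st h_antR 1 0.
  st (eq_sym (ICH Gep Gep [])) 0 0.
  reflexivity.
Qed.
Lemma d_santi : R [true; true] (flatten (EC (EG Gs) (EG Gmu))) = R [true; true] (flatten (EC (EC (EG Gmu) (ET (EG Gs) (EG Gs))) (EG (Gbr true true)))).
Proof.
  cbv -[run].
  st (eq_sym h_counitR) 0 0.
  st (eq_sym h_counitR) 1 2.
  st (NRr Gep true) 3 1.
  st (eq_sym h_unitR) 7 0.
  st (eq_sym (ICH (Gbr true true) Gep [])) 2 1.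
  st (eq_sym (ICH Gep Gep [])) 3 2.
  st (ICH Gs Geta []) 6 0.
  st (ICH Gmu Geta []) 5 0.
  st (eq_sym d_L2) 3 2.
  st (eq_sym (ICH Gmu Gmu [])) 11 0.
  st (eq_sym (ICH Gs Gmu [])) 12 0.
  st (eq_sym h_assoc) 13 0.
  st (eq_sym (NRr Gde true)) 2 1.
  st (ICH Gde Gde []) 0 0.
  st (eq_sym h_coassoc) 1 0.
  st (eq_sym (ICH Gde Gde [])) 0 0.
  st (eq_sym (ICH Gde Gde [true])) 1 0.
  st (ICH (Gbr true true) Gde [true]) 4 1.
  st (ICH (Gbr true true) Gde []) 3 2.
  st (eq_sym h_coassoc) 2 3.
  st (ICH (Gbr true true) (Gbr true true) []) 5 1.
  st (NLr Gde true) 3 2.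
  st (ICH Gde Gde [true]) 1 0.
  st (ICH Gde (Gbr true true) []) 2 0.
  st (ICH Gmu (Gbr true true) []) 6 2.
  st (ICH (Gbr true true) (Gbr true true) [true]) 5 1.
  st (ICH Gde (Gbr true true) []) 4 2.
  st (ICH Gde (Gbr true true) [true]) 3 0.
  st (ICH Gmu Gs []) 7 2.
  st (ICH (Gbr true true) Gs [true]) 6 1.
  st (ICH Gde Gs []) 5 2.
  st (ICH Gde Gs [true]) 4 0.
  st (ICH Gmu Gs [true]) 8 2.
  st (ICH (Gbr true true) Gs [true; true]) 7 1.
  st (ICH Gde Gs [true]) 6 2.
  st (ICH Gde Gs [true; true]) 5 0.
  st (ICH Gmu Gmu []) 9 2.
  st (ICH (Gbr true true) Gmu [true]) 8 1.
  st (ICH Gde Gmu []) 7 2.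
  st (ICH Gde Gmu [true]) 6 0.
  st (eq_sym (ICH Gmu Gmu [])) 10 0.
  st (eq_sym (ICH Gs Gmu [])) 11 0.
  st d_L1 7 0.
  st (eq_sym (ICH Gep Gmu [true])) 6 0.
  st (eq_sym (ICH Gep Gs [true; true])) 5 0.
  st (eq_sym (ICH Gep Gs [true])) 4 0.
  st (eq_sym (ICH Gep (Gbr true true) [true])) 3 0.
  st (eq_sym (ICH Gep (Gbr true true) [])) 2 0.
  st (eq_sym (ICH Gep Gmu [])) 7 0.
  st (eq_sym (ICH Gep Gs [true])) 6 0.
  st (eq_sym (ICH Gep Gs [])) 5 0.
  st (eq_sym (ICH Gep (Gbr true true) [])) 4 0.
  st (eq_sym (NLr Gep true)) 3 0.
  st h_unitL 8 0.
  st (ICH Gde Gde []) 0 0.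
  st h_counitL 1 0.
  st h_counitL 0 1.
  reflexivity.
Qed.
Lemma d_L1p : R [true] (flatten (EC (EC (EC (ET (EG Gmu) (EG Gmu)) (ET (EI [true]) (ET (EG (Gbr true true)) (EI [true])))) (ET (EG Gde) (EC (EG Gde) (EG Gs)))) (EG Gde))) = R [true] (flatten (EC (ET (EG Geta) (EG Geta)) (EG Gep))).
Proof.
  cbv -[run].
  st (ICH Gde Gs []) 1 0.
  st (eq_sym h_bialg) 2 0.
  st h_antR 0 0.
  st h_deta 1 0.
  reflexivity.
Qed.
Lemma d_L2p : R [true] (flatten (EC (EC (EC (ET (EG Gmu) (EG Gmu)) (ET (EI [true]) (ET (EG (Gbr true true)) (EI [true])))) (ET (EC (EC (EG (Gbr true true)) (ET (EG Gs) (EG Gs))) (EG Gde)) (EG Gde))) (EG Gde))) = R [true] (flatten (EC (ET (EG Geta) (EG Geta)) (EG Gep))).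
Proof.
  cbv -[run].
  st h_coassoc 0 0.
  st (eq_sym (ICH Gs Gde [])) 1 0.
  st (ICH (Gbr true true) Gde []) 4 0.
  st (ICH Gs Gde []) 3 1.
  st (eq_sym h_coassoc) 2 1.
  st (NLr Gs true) 4 0.
  st (ICH Gs (Gbr true true) []) 5 0.
  st (NLr Gde true) 3 0.
  st h_antL 4 0.
  st (eq_sym (NLr Gep true)) 3 0.
  st h_counitL 2 1.
  st (eq_sym (ICH Geta Gs [])) 1 0.
  st (eq_sym (ICH Geta Gde [])) 0 0.
  st h_antL 1 1.
  st (ICH Geta Gep []) 0 0.
  reflexivity.
Qed.
Lemma d_dsanti : R [true] (flatten (EC (EG Gde) (EG Gs))) = R [true] (flatten (EC (EC (EG (Gbr true true)) (ET (EG Gs) (EG Gs))) (EG Gde))).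
Proof.
  cbv -[run].
  st (eq_sym h_counitL) 0 0.
  st (eq_sym h_unitL) 4 0.
  st (eq_sym h_unitL) 6 1.
  st (ICH Gmu Geta []) 5 0.
  st (eq_sym (NRr Geta true)) 5 1.
  st (ICH Gep Gs []) 1 0.
  st (ICH Gep Gde []) 2 0.
  st (eq_sym d_L2p) 3 0.
  st (eq_sym (ICH Gde Gde [])) 2 0.
  st (eq_sym (ICH Gde Gs [])) 1 0.
  st h_coassoc 0 0.
  st (NRr Gmu true) 11 1.
  st (ICH Gmu (Gbr true true) [true]) 10 0.
  st (ICH Gmu (Gbr true true) []) 11 0.
  st (ICH Gmu Gmu [true]) 12 0.
  st h_assoc 13 0.
  st (eq_sym (ICH Gmu Gmu [])) 12 1.
  st (eq_sym (ICH Gmu Gmu [])) 13 0.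
  st h_assoc 14 1.
  st (ICH (Gbr true true) (Gbr true true) []) 9 1.
  st (eq_sym (NLr Gmu true)) 10 1.
  st (eq_sym (ICH Gde Gde [true])) 3 0.
  st (eq_sym (ICH Gde Gs [true])) 2 0.
  st (eq_sym (ICH Gde Gde [])) 1 0.
  st (eq_sym (ICH Gs Gde [true; true])) 4 0.
  st (eq_sym (ICH Gs Gs [true; true])) 3 0.
  st (eq_sym (ICH Gs Gde [true])) 2 0.
  st (eq_sym (ICH Gs Gde [true])) 5 1.
  st (eq_sym (ICH Gs Gs [true])) 4 1.
  st (eq_sym (ICH Gs Gde [])) 3 1.
  st (eq_sym (ICH (Gbr true true) Gde [true])) 6 0.
  st (eq_sym (ICH (Gbr true true) Gs [true])) 5 0.
  st (eq_sym (ICH (Gbr true true) Gde [])) 4 0.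
  st (eq_sym (ICH Gde Gde [])) 7 2.
  st (eq_sym (ICH Gde Gs [])) 6 2.
  st (ICH Gmu Gmu [true]) 12 0.
  st (ICH (Gbr true true) Gmu []) 11 1.
  st d_L1p 5 2.
  st (ICH Geta Geta []) 6 2.
  st (NLr Geta true) 7 1.
  st (eq_sym (ICH Geta Geta [true])) 6 1.
  st (eq_sym (ICH Gmu Geta [true])) 7 0.
  st h_unitR 8 1.
  st h_unitR 6 0.
  st (ICH (Gbr true true) Gep []) 4 0.
  st (ICH Gs Gep []) 3 1.
  st (ICH Gs Gep [true]) 2 0.
  st (ICH Gde Gep []) 1 0.
  st h_counitR 0 0.
  reflexivity.
Qed.
Lemma main_eq : R [true; false] (flatten (EC (EC (EC (EC (EC (ET (EI [true]) (EG Gact)) (ET (EG (Gbr false true)) (EI [true]))) (ET (EG Gsb) (EC (EC (EG Gde) (EG Gs)) (EG Gmu)))) (ET (EG (Gbr true false)) (EI [true]))) (ET (EI [true]) (EG Gco))) (EC (EC (EC (EC (ET (EI [true]) (EG Gact)) (ET (EG (Gbr false true)) (EI [true]))) (ET (EG Gsb) (EC (EC (EG Gde) (EG Gs)) (EG Gmu)))) (ET (EG (Gbr true false)) (EI [true]))) (ET (EI [true]) (EG Gco))))) = R [true; false] (flatten (EC (EC (EC (ET (EC (EG Gs) (EG Gs)) (EC (EG Gsb) (EG Gsb))) (EG (Gbr false true))) (EG (Gbr true false))) (ET (EI [true]) (EC (EC (EG Gact) (ET (EI [false]) (EG Gs))) (EG Gco))))).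
Proof.
  cbv -[run].
  st (ICH Gsb Gmu []) 10 0.
  st h_yd 5 0.
  st (ICH Gact Gmu []) 8 0.
  st h_sbact 9 0.
  st (eq_sym (ICH Gsb Gmu [true])) 8 0.
  st (eq_sym (ICH Gact Gmu [])) 9 0.
  st d_santi 10 1.
  st h_bialg 13 1.
  st (ICH Gs Gs []) 11 1.
  st d_dsanti 12 1.
  st (eq_sym (ICH Gde Gs [])) 11 1.
  st (eq_sym (ICH Gs Gs [true])) 12 1.
  st (eq_sym (ICH Gs Gs [])) 13 2.
  st (eq_sym (ICH (Gbr true true) Gs [])) 14 1.
  st d_dsanti 15 3.
  st (ICH Gact (Gbr true true) []) 9 0.
  st (ICH Gact Gde []) 10 0.
  st (ICH Gact Gs []) 11 0.
  st (ICH Gact Gs [true]) 12 0.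
  st (ICH Gact (Gbr true true) []) 13 0.
  st (ICH Gact Gde [true; true]) 14 0.
  st (ICH Gact Gs [true; true]) 15 0.
  st (ICH Gact Gs [true; true; true]) 16 0.
  st (ICH Gact (Gbr true true) [true; true]) 17 0.
  st (ICH Gact (Gbr true true) [true]) 18 0.
  st (ICH Gact Gmu []) 19 0.
  st (ICH Gact Gmu [true]) 20 0.
  st (NRr Gact true) 21 0.
  st h_ract 23 1.
  st (ICH (Gbr true true) Gde []) 13 2.
  st (ICH (Gbr true true) Gs []) 14 2.
  st (ICH (Gbr true true) Gs [true]) 15 2.
  st (ICH (Gbr true true) (Gbr true true) []) 16 2.
  st (eq_sym (NLr Gmu true)) 17 2.
  st (eq_sym (ICH (Gbr true true) Gmu [])) 19 1.
  st (eq_sym (ICH (Gbr false true) Gmu [true])) 20 0.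
  st (eq_sym h_assoc) 21 2.
  st (ICH (Gbr false true) Gmu []) 20 0.
  st (eq_sym (NRr Gmu true)) 18 1.
  st (eq_sym (ICH Gsb (Gbr true true) [])) 7 0.
  st (eq_sym (ICH Gsb Gde [true])) 6 0.
  st (NLr Gde true) 7 1.
  st (eq_sym h_coassoc) 8 1.
  st (ICH Gs Gs []) 10 2.
  st (ICH Gde Gs []) 9 1.
  st (ICH Gs Gde [true]) 11 2.
  st (ICH Gde Gde [true]) 10 1.
  st (ICH Gs Gs [true]) 12 2.
  st (ICH Gde Gs [true]) 11 1.
  st (ICH Gs Gs [true; true]) 13 2.
  st (ICH Gde Gs [true; true]) 12 1.
  st (ICH Gs (Gbr true true) [true]) 14 2.
  st (ICH Gde (Gbr true true) [true]) 13 1.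
  st (ICH Gs Gmu []) 15 2.
  st (ICH Gde Gmu []) 14 1.
  st h_antR 15 1.
  st (NRr Geta true) 16 1.
  st (eq_sym (ICH (Gbr false true) Geta [])) 16 0.
  st h_unitL 17 2.
  st (ICH Gs Gde []) 9 2.
  st (ICH Gde Gde []) 8 1.
  st (ICH Gs Gs []) 10 2.
  st (ICH Gde Gs []) 9 1.
  st (ICH Gs Gs [true]) 11 2.
  st (ICH Gde Gs [true]) 10 1.
  st (ICH Gs (Gbr true true) []) 12 2.
  st (ICH Gde (Gbr true true) []) 11 1.
  st (eq_sym (ICH Gep Gmu [])) 14 1.
  st (eq_sym (ICH Gep Gs [])) 13 1.
  st h_counitL 12 1.
  st d_santi 3 1.
  st (eq_sym (ICH Gco Gmu [])) 6 0.
  st (eq_sym (ICH Gsb Gmu [true])) 7 0.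
  st (NLr Gmu true) 8 1.
  st (ICH Gmu Gde []) 10 1.
  st (ICH Gmu Gs []) 11 1.
  st (ICH Gmu Gs [true]) 12 1.
  st (ICH Gmu (Gbr true true) []) 13 1.
  st d_santi 14 1.
  st h_assoc 17 1.
  st (eq_sym (NRr Gde true)) 9 2.
  st (eq_sym (NRr Gde true)) 8 1.
  st (NLr Gs true) 14 3.
  st (NRr Gs true) 13 3.
  st (eq_sym (NRr (Gbr true true) true)) 11 2.
  st (eq_sym (NRr (Gbr true true) true)) 9 1.
  st (ICH (Gbr true true) (Gbr true true) []) 11 1.
  st (ICH (Gbr true true) Gs []) 13 2.
  st (ICH (Gbr true true) Gs [true]) 12 1.
  st (eq_sym (ICH (Gbr true true) Gs [])) 15 1.
  st (NRr (Gbr true true) true) 13 1.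
  st (eq_sym (ICH Gs Gs [true])) 16 1.
  st (eq_sym (ICH Gs (Gbr true true) [])) 15 1.
  st (eq_sym (ICH Gs Gs [])) 17 2.
  st (eq_sym d_santi) 16 2.
  st (ICH Gs Gmu []) 15 1.
  st (eq_sym (NRr Gmu true)) 13 1.
  st (eq_sym (ICH Gmu Gs [true])) 12 1.
  st (eq_sym (ICH Gmu (Gbr true true) [])) 11 1.
  st (eq_sym (NLr Gmu true)) 9 1.
  st (ICH Gsb (Gbr true true) []) 2 0.
  st (ICH Gsb Gs []) 3 0.
  st (ICH Gsb Gs [true]) 4 0.
  st h_sbco 5 0.
  st (eq_sym (ICH Gco Gs [true])) 4 0.
  st (eq_sym (ICH Gco Gs [])) 3 0.
  st (eq_sym (ICH Gco (Gbr true true) [])) 2 0.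
  st (eq_sym (NLr Gco true)) 1 0.
  st h_ccoassoc 0 1.
  st (eq_sym (ICH (Gbr true false) Gde [])) 1 0.
  st (NLr Gde true) 2 1.
  st (ICH Gs Gs []) 4 2.
  st (ICH Gde Gs []) 3 1.
  st (eq_sym (ICH Gsb Gs [true])) 5 0.
  st (eq_sym (ICH Gsb Gde [])) 4 0.
  st (eq_sym (ICH Gsb Gs [true])) 6 0.
  st (eq_sym (ICH Gsb Gde [])) 5 0.
  st (eq_sym (ICH Gde Gs [])) 7 1.
  st h_coassoc 6 1.
  st h_antR 7 2.
  st (NLr Geta true) 8 1.
  st (ICH Geta (Gbr true true) []) 8 1.
  st (ICH Geta Gs [true]) 9 1.
  st (NRr Geta true) 10 1.
  st (eq_sym (ICH Gs Geta [])) 10 1.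
  st d_seta 11 2.
  st h_unitR 11 1.
  st h_counitR 6 1.
  st (eq_sym (NRr Gs true)) 6 1.
  st (eq_sym (ICH Gsb Gs [true])) 3 0.
  st (eq_sym (ICH Gsb (Gbr true true) [])) 2 0.
  st (eq_sym (ICH Gsb Gs [true])) 4 0.
  st (eq_sym (ICH Gsb (Gbr true true) [])) 3 0.
  st (eq_sym (ICH Gs Gs [])) 5 1.
  st (eq_sym (NLr Gs true)) 4 1.
  st (NLr Gs true) 6 1.
  st (NLr Gs false) 8 0.
  st (NLr Gs false) 7 0.
  st (ICH Gsb Gs [true]) 3 0.
  st (ICH Gsb (Gbr true true) []) 4 0.
  st (ICH Gsb (Gbr true true) []) 5 0.
  st (NRr Gsb true) 6 0.
  st (ICH Gsb Gs [true]) 2 0.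
  st (ICH Gsb (Gbr true true) []) 3 0.
  st (ICH Gsb (Gbr true true) []) 4 0.
  st (NRr Gsb true) 5 0.
  st (eq_sym (ICH Gs Gsb [])) 7 0.
  st (eq_sym (ICH Gs Gsb [])) 8 0.
  st (eq_sym h_sbact) 9 1.
  st (eq_sym (ICH Gs Gsb [])) 6 0.
  st (eq_sym (ICH Gs Gsb [])) 7 0.
  st (eq_sym h_sbact) 8 1.
  st (ICH Gs Gact []) 7 0.
  st (ICH Gs Gact []) 6 0.
  st (eq_sym (NRr Gact true)) 4 0.
  st (ICH (Gbr true false) Gs []) 1 0.
  st (eq_sym (NLr Gact true)) 2 0.
  reflexivity.
Qed.

Lemma main_sec : cross_antipode muA deltaA act coact SA SB ∘ cross_antipode muA deltaA act coact SA SB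
  = ((SA ∘ SA) ⊗ (SB ∘ SB)) ∘ braid (w b) (w a) ∘ braid (w a) (w b) ∘ (idm (w a) ⊗ sigmaBA act coact SA).
Proof.
  apply (mk_inj (x := [true; false]) (y := [true; false])).
  change (eval muA etaA deltaA epsA SA act coact SB (EC (EC (EC (EC (EC (ET (EI [true]) (EG Gact)) (ET (EG (Gbr false true)) (EI [true]))) (ET (EG Gsb) (EC (EC (EG Gde) (EG Gs)) (EG Gmu)))) (ET (EG (Gbr true false)) (EI [true]))) (ET (EI [true]) (EG Gco))) (EC (EC (EC (EC (ET (EI [true]) (EG Gact)) (ET (EG (Gbr false true)) (EI [true]))) (ET (EG Gsb) (EC (EC (EG Gde) (EG Gs)) (EG Gmu)))) (ET (EG (Gbr true false)) (EI [true]))) (ET (EI [true]) (EG Gco)))) = eval muA etaA deltaA epsA SA act coact SB (EC (EC (EC (ET (EC (EG Gs) (EG Gs)) (EC (EG Gsb) (EG Gsb))) (EG (Gbr false true))) (EG (Gbr true false))) (ET (EI [true]) (EC (EC (EG Gact) (ET (EI [false]) (EG Gs))) (EG Gco))))).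
  rewrite <- (proj2 (proj2 (flatten_ok muA etaA deltaA epsA SA act coact SB (e := (EC (EC (EC (EC (EC (ET (EI [true]) (EG Gact)) (ET (EG (Gbr false true)) (EI [true]))) (ET (EG Gsb) (EC (EC (EG Gde) (EG Gs)) (EG Gmu)))) (ET (EG (Gbr true false)) (EI [true]))) (ET (EI [true]) (EG Gco))) (EC (EC (EC (EC (ET (EI [true]) (EG Gact)) (ET (EG (Gbr false true)) (EI [true]))) (ET (EG Gsb) (EC (EC (EG Gde) (EG Gs)) (EG Gmu)))) (ET (EG (Gbr true false)) (EI [true]))) (ET (EI [true]) (EG Gco))))) eq_refl))).
  rewrite <- (proj2 (proj2 (flatten_ok muA etaA deltaA epsA SA act coact SB (e := (EC (EC (EC (ET (EC (EG Gs) (EG Gs)) (EC (EG Gsb) (EG Gsb))) (EG (Gbr false true))) (EG (Gbr true false))) (ET (EI [true]) (EC (EC (EG Gact) (ET (EI [false]) (EG Gs))) (EG Gco))))) eq_refl))).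
  exact main_eq.
Qed.

End Main.

Theorem mainTheorem15 (C : BraidedCat) (a b : Ob C)
  (muA : Hom (w a ++ w a) (w a)) (etaA : Hom nil (w a))
  (deltaA : Hom (w a) (w a ++ w a)) (epsA : Hom (w a) nil) (SA : Hom (w a) (w a))
  (act : Hom (w b ++ w a) (w b)) (coact : Hom (w b) (w b ++ w a))
  (muB : Hom (w b ++ w b) (w b)) (etaB : Hom nil (w b))
  (deltaB : Hom (w b) (w b ++ w b)) (epsB : Hom (w b) nil) (SB : Hom (w b) (w b)) :
  is_braided_group muA etaA deltaA epsA SA ->
  is_braided_group_in_YD muA etaA deltaA epsA act coact muB etaB deltaB epsB SB ->
  cross_antipode muA deltaA act coact SA SB ∘ cross_antipode muA deltaA act coact SA SB
  = ((SA ∘ SA) ⊗ (SB ∘ SB)) ∘ braid (w b) (w a) ∘ braid (w a) (w b)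
      ∘ (idm (w a) ⊗ sigmaBA act coact SA).
Proof.
  intros HA HB.
  unfold is_braided_group, is_braided_group_wrt in HA. cbv zeta in HA.
  destruct HA as (H1 & H2 & H3 & H4 & H5 & H6 & H7 & H8 & H9 & H10 & H11 & H12).
  unfold is_braided_group_in_YD, is_YD_object in HB. cbv zeta in HB.
  destruct HB as ((Y1 & Y2 & Y3 & Y4 & Y5) & _ & _ & _ & _ & _ & _ & _ & _ & Z1 & Z2 & _).
  eapply main_sec; eassumption.
Qed.
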